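(* Let $(G,v)$ be a Hamel space over an ordered field $C$, let $\alpha\in v(G\setminus\{0\})$, let $P$ be an $\alpha$-cut, and let $P'\subseteq G$ be a downward closed subset of $(G,<_0)$. Then there are an extension $(G',v')$ of $(G,v)$ and an element $h\in G'$ such that (1) $P'<_0h<_0G\setminus P'$; (2) $v'(h)=\alpha$; (3) $P<_1h<_1\overline{B}(\alpha)\setminus P$; and (4) for any embedding of Hamel spaces $i:(G,v)\to(G^*,v^* )$ and any $h^*\in G^*$ such that (a) $i(P')<_0h^*<_0i(G\setminus P')$, (b) for all $g\in G$ and $c\in C$, $v^*(i(g)+ch^* )=\min_0(v^*(i(g)),i(\alpha))$ if $c\neq0$ and $v^*(i(g)+ch^* )=v^*(i(g))$ if $c=0$, and (c) $i(P)<_1h^*<_1 i(\overline{B}(\alpha)\setminus P)$, there is an extension of $i$ to an embedding $(G',v')\to(G^*,v^* )$ sending $h$ to $h^*$.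
   Context: Let $C$ be an ordered field. A $2$-ordered $C$-vector space is a $C$-vector space $G$ with two total orderings $<_0,<_1$ such that $G$ is an ordered $C$-vector space with respect to each. Put $G_\infty=G\cup\{\infty\}$, with $G<_0\infty$, $G<_1\infty$. A Hamel valuation on $G$ is a map $v:G\to G_\infty$ such that for all $x,y\in G$ and $\lambda\in C^{\times}$: $v(x)=\infty$ iff $x=0$; $v(x+y)\ge_0\min_0(v(x),v(y))$; $v(\lambda x)=v(x)$; if $0<_1x<_1y$ then $v(x)\ge_0v(y)$; $v(v(x))=v(x)$ (with $v(\infty)=\infty$); and $v(x)>_10$. A Hamel space is such a pair $(G,v)$. $(G',v')$ is an extension of $(G,v)$ if $G$ is a $C$-subspace of $G'$, both orderings on $G$ are restrictions of those on $G'$, and $v'|_G=v$. An embedding $i:(G,v)\to(G',v')$ is an injective $C$-linear map preserving $<_0$ and $<_1$ with $i(v(x))=v'(i(x))$. For $\alpha\in v(G\setminus\{0\})$, let $\overline{B}(\alpha)=\{g\in G:v(g)\ge_0\alpha\}$ and $B(\alpha)=\{g\in G:v(g)>_0\alpha\}$. An $\alpha$-cut is a subset $P\subseteq\overline{B}(\alpha)$ which is downward closed in $(\overline{B}(\alpha),<_1)$ and such that for all $x,y\in\overline{B}(\alpha)$ with $x-y\in B(\alpha)$, $x\in P$ iff $y\in P$. *)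

(* Defs.v *)
From HB Require Import structures.
From mathcomp Require Import all_boot all_order all_algebra.
Set Implicit Arguments. Unset Strict Implicit. Unset Printing Implicit Defensive.
Import Order.TTheory GRing.Theory Num.Theory.
Local Open Scope ring_scope.

(* The ordered field C is a [realFieldType]; a C-vector space is an [lmodType C].
   Orders on G are boolean strict relations; G_oo = option G with None = oo. *)

Section Defs.
Variable C : realFieldType.

Definition strict_total_order (G : Type) (lt : rel G) : Prop :=
  [/\ (forall x, ~~ lt x x),
      (forall x y z, lt x y -> lt y z -> lt x z) &
      (forall x y, [\/ lt x y, x = y | lt y x])].

Definition ordered_vs (G : lmodType C) (lt : rel G) : Prop :=
  [/\ strict_total_order lt,
      (forall x y z : G, lt x y -> lt (x + z) (y + z)) &
      (forall (c : C) (x : G), 0 < c -> lt 0 x -> lt 0 (c *: x))].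

Definition two_ordered (G : lmodType C) (lt0 lt1 : rel G) : Prop :=
  ordered_vs lt0 /\ ordered_vs lt1.

Definition olt (G : Type) (lt : rel G) (a b : option G) : bool :=
  match a, b with
  | Some x, Some y => lt x y
  | Some _, None => true
  | None, _ => false
  end.

Definition ole (G : eqType) (lt : rel G) (a b : option G) : bool :=
  (a == b) || olt lt a b.

Definition omin (G : Type) (lt : rel G) (a b : option G) : option G :=
  if olt lt a b then a else b.

Definition vext (G : Type) (v : G -> option G) (a : option G) : option G :=
  match a with Some x => v x | None => None end.

Definition hamel_valuation (G : lmodType C) (lt0 lt1 : rel G)
    (v : G -> option G) : Prop :=
  (forall x, v x = None <-> x = 0) /\
  [/\ (forall x y, ole lt0 (omin lt0 (v x) (v y)) (v (x + y))),
      (forall (c : C) x, c != 0 -> v (c *: x) = v x),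
      (forall x y, lt1 0 x -> lt1 x y -> ole lt0 (v y) (v x)),
      (forall x, vext v (v x) = v x) &
      (forall x, olt lt1 (Some 0) (v x))].

Definition hamel_space (G : lmodType C) (lt0 lt1 : rel G) (v : G -> option G) :=
  two_ordered lt0 lt1 /\ hamel_valuation lt0 lt1 v.

Definition is_linear (G H : lmodType C) (f : G -> H) : Prop :=
  forall (c : C) (x y : G), f (c *: x + y) = c *: f x + f y.

Definition hamel_embedding (G : lmodType C) (lt0 lt1 : rel G) (v : G -> option G)
    (H : lmodType C) (lt0' lt1' : rel H) (v' : H -> option H) (f : G -> H) : Prop :=
  [/\ injective f, is_linear f,
      (forall x y, lt0 x y -> lt0' (f x) (f y)),
      (forall x y, lt1 x y -> lt1' (f x) (f y)) &
      (forall x, v' (f x) = omap f (v x))].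

Definition cball (G : lmodType C) (lt0 : rel G) (v : G -> option G) (a : G) (g : G) :=
  ole lt0 (Some a) (v g).
Definition oball (G : lmodType C) (lt0 : rel G) (v : G -> option G) (a : G) (g : G) :=
  olt lt0 (Some a) (v g).

Definition alpha_cut (G : lmodType C) (lt0 lt1 : rel G) (v : G -> option G)
    (a : G) (P : G -> Prop) : Prop :=
  [/\ (forall x, P x -> cball lt0 v a x),
      (forall x y, cball lt0 v a x -> cball lt0 v a y -> lt1 y x -> P x -> P y) &
      (forall x y, cball lt0 v a x -> cball lt0 v a y -> oball lt0 v a (x - y) ->
         (P x <-> P y))].

Definition down_closed (G : Type) (lt : rel G) (P : G -> Prop) : Prop :=
  forall x y, lt y x -> P x -> P y.

End Defs.

(* Main.v *)
Require Import Defs.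
From HB Require Import structures.
From mathcomp Require Import all_boot all_order all_algebra.
From Stdlib Require Import ClassicalDescription.
Import Order.TTheory GRing.Theory Num.Theory.
Local Open Scope ring_scope.
Set Implicit Arguments. Unset Strict Implicit.

Definition pb (p : Prop) : bool := if excluded_middle_informative p then true else false.
Lemma pbP (p : Prop) : pb p <-> p.
Proof. rewrite /pb; case: excluded_middle_informative => //. Qed.

Section OVS.
Variable C : realFieldType.
Variable G : lmodType C.
Variable lt : rel G.
Hypothesis H : ordered_vs lt.

Definition nn (x : G) := lt 0 x \/ x = 0.

Lemma lt_irr x : ~ lt x x.
Proof using H. by case: H => [[/(_ x) /negP]]. Qed.
Lemma lt_trans x y z : lt x y -> lt y z -> lt x z.
Proof using H. by case: H => [[_ T _]] _ _; apply: T. Qed.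
Lemma lt_tri x y : [\/ lt x y, x = y | lt y x].
Proof using H. by case: H => [[_ _ T]] _ _; apply: T. Qed.
Lemma lt_add x y z : lt x y -> lt (x + z) (y + z).
Proof using H. by case: H => _ T _; apply: T. Qed.
Lemma lt_asym x y : lt x y -> lt y x -> False.
Proof using H. by move=> a b; apply: (@lt_irr x); apply: lt_trans a b. Qed.
Lemma lt_subE x y : lt x y <-> lt 0 (y - x).
Proof using H.
split=> a; first by have := lt_add (- x) a; rewrite subrr.
by have := lt_add x a; rewrite add0r subrK.
Qed.
Lemma pos_add a b : lt 0 a -> lt 0 b -> lt 0 (a + b).
Proof using H. move=> ha hb; have := lt_add b ha; rewrite add0r; exact: lt_trans. Qed.
Lemma nn_add a b : nn a -> nn b -> nn (a + b).
Proof using H.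
case=> [ha|->]; case=> [hb|->]; rewrite ?addr0 ?add0r.
- by left; apply: pos_add.
- by left.
- by left.
- by right.
Qed.
Lemma pos_nn_add a b : lt 0 a -> nn b -> lt 0 (a + b).
Proof using H. by move=> ha [hb|->]; [apply: pos_add|rewrite addr0]. Qed.
Lemma pos_scale c x : 0 < c -> lt 0 x -> lt 0 (c *: x).
Proof using H. by case: H => _ _ T; apply: T. Qed.
Lemma pos_scaleE c x : 0 < c -> lt 0 (c *: x) <-> lt 0 x.
Proof using H.
move=> c0; split; last exact: pos_scale.
move=> /(pos_scale (c := c^-1)); rewrite invr_gt0 scalerA mulVf ?scale1r //.
  by apply. by rewrite gt_eqF.
Qed.
Lemma nn_scale c x : 0 <= c -> nn x -> nn (c *: x).
Proof using H.
rewrite le_eqVlt => /orP [/eqP <-|c0]; first by right; rewrite scale0r.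
by case=> [hx|->]; [left; apply: pos_scale|right; rewrite scaler0].
Qed.
Lemma lt_negE x : lt x 0 <-> lt 0 (- x).
Proof using H. by rewrite lt_subE sub0r. Qed.
Lemma pos_or_neg x : x != 0 -> lt 0 x \/ lt 0 (- x).
Proof using H.
move=> /eqP x0; case: (lt_tri 0 x) => [h|h|h]; first by left.
  by case: x0.
by right; apply/lt_negE.
Qed.
Lemma nn_lt x y : nn (y - x) -> lt x y \/ x = y.
Proof using H. by case=> [h|/eqP]; [left; apply/lt_subE|rewrite subr_eq0 => /eqP ->; right]. Qed.
Lemma lt_nn x y : lt x y \/ x = y -> nn (y - x).
Proof using H. by case=> [/lt_subE h|->]; [left|right; rewrite subrr]. Qed.
End OVS.

Section OPT.
Variable G : eqType.
Variable lt : rel G.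
Hypothesis H : strict_total_order lt.
Let irr x : ~~ lt x x. Proof. by case: H. Qed.
Let tr x y z : lt x y -> lt y z -> lt x z. Proof. by case: H => _ T _; apply: T. Qed.
Let tri x y : [\/ lt x y, x = y | lt y x]. Proof. by case: H. Qed.

Lemma olt_irr a : ~~ olt lt a a.
Proof using H. by case: a => //= x; apply: irr. Qed.
Lemma olt_trans a b c : olt lt a b -> olt lt b c -> olt lt a c.
Proof using H. by case: a; case: b; case: c => //= x y z; apply: tr. Qed.
Lemma ole_refl a : ole lt a a.
Proof using H. by rewrite /ole eqxx. Qed.
Lemma oleP a b : ole lt a b <-> a = b \/ olt lt a b.
Proof using H. by rewrite /ole; split=> [/orP [/eqP|]|[->|->]]; auto; rewrite ?eqxx ?orbT. Qed.
Lemma ole_olt_trans a b c : ole lt a b -> olt lt b c -> olt lt a c.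
Proof using H. by move/oleP=> [->//|]; apply: olt_trans. Qed.
Lemma olt_ole_trans a b c : olt lt a b -> ole lt b c -> olt lt a c.
Proof using H. by move=> h /oleP [<-//|]; apply: olt_trans. Qed.
Lemma ole_trans a b c : ole lt a b -> ole lt b c -> ole lt a c.
Proof using H. by move=> h /oleP [<-//|h2]; apply/oleP; right; apply: ole_olt_trans h h2. Qed.
Lemma olt_ole a b : olt lt a b -> ole lt a b.
Proof using H. by move=> h; apply/oleP; right. Qed.
Lemma ole_total a b : ole lt a b \/ olt lt b a.
Proof using H.
case: a => [x|]; case: b => [y|] /=.
- case: (tri x y) => [h|->|h]; first by left; apply/oleP; right.
    by left; apply: ole_refl.
  by right.
- by left; apply/oleP; right.
- by right.
- by left; apply: ole_refl.
Qed.
Lemma olt_nle a b : olt lt a b -> ~ ole lt b a.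
Proof using H. move=> h /oleP [e|h2]; first by subst; move: h; rewrite (negbTE (olt_irr _)).
by move: (olt_trans h h2); rewrite (negbTE (olt_irr _)).
Qed.
Lemma nole_olt a b : ~ ole lt a b -> olt lt b a.
Proof using H. by case: (ole_total a b). Qed.
Lemma omin_l a b : ole lt (omin lt a b) a.
Proof using H. rewrite /omin; case: ifP => h; [exact: ole_refl|].
by case: (ole_total b a) => // h2; rewrite h2 in h. Qed.
Lemma omin_r a b : ole lt (omin lt a b) b.
Proof using H. rewrite /omin; case: ifP => h; [exact: olt_ole|exact: ole_refl]. Qed.
Lemma omin_glb a b c : ole lt c a -> ole lt c b -> ole lt c (omin lt a b).
Proof using H. by rewrite /omin; case: ifP. Qed.
Lemma omin_mono a b a' b' : ole lt a a' -> ole lt b b' -> ole lt (omin lt a b) (omin lt a' b').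
Proof using H.
move=> h1 h2; apply: omin_glb; [apply: ole_trans (omin_l _ _) h1|apply: ole_trans (omin_r _ _) h2].
Qed.
Lemma omin_some a b : omin lt a (Some b) <> None.
Proof using H. by rewrite /omin; case: a => [x|] //=; case: ifP. Qed.
Lemma olt_omin a b c : olt lt a (omin lt b c) -> olt lt a b /\ olt lt a c.
Proof using H. by move=> h; split; apply: olt_ole_trans h _; [apply: omin_l|apply: omin_r]. Qed.
Lemma olt_omin2 a b c : olt lt (omin lt a c) (omin lt b c) -> olt lt a c /\ olt lt a b.
Proof using H.
rewrite {1}/omin; case: ifP => h1 h2.
  by split => //; case: (olt_omin h2).
by case: (olt_omin h2) => _ /olt_nle; case; apply: ole_refl.
Qed.
End OPT.

Section HAM.
Variable C : realFieldType.
Variable G : lmodType C.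
Variables (lt0 lt1 : rel G) (v : G -> option G).
Hypothesis HS : hamel_space lt0 lt1 v.

Lemma hs_ov0 : ordered_vs lt0. Proof using HS. by case: HS => [[]]. Qed.
Lemma hs_ov1 : ordered_vs lt1. Proof using HS. by case: HS => [[]]. Qed.
Lemma hs_sto0 : strict_total_order lt0. Proof using HS. by case: hs_ov0. Qed.
Lemma v_none x : v x = None <-> x = 0. Proof using HS. by case: HS => _ [A _]. Qed.
Lemma v0 : v 0 = None. Proof using HS. by apply/v_none. Qed.
Lemma v_scale c x : c != 0 -> v (c *: x) = v x. Proof using HS. by case: HS => _ [_ [_ A _ _ _]]; apply: A. Qed.
Lemma v_neg x : v (- x) = v x.
Proof using HS. by rewrite -scaleN1r v_scale // oppr_eq0 oner_eq0. Qed.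
Lemma v_ultra x y : ole lt0 (omin lt0 (v x) (v y)) (v (x + y)).
Proof using HS. by case: HS => _ [_ [A _ _ _ _]]; apply: A. Qed.
Lemma v_mono x y : lt1 0 x -> lt1 x y -> ole lt0 (v y) (v x).
Proof using HS. by case: HS => _ [_ [_ _ A _ _]]; apply: A. Qed.
Lemma v_idem x : vext v (v x) = v x. Proof using HS. by case: HS => _ [_ [_ _ _ A _]]. Qed.
Lemma v_pos x : olt lt1 (Some 0) (v x). Proof using HS. by case: HS => _ [_ [_ _ _ _ A]]. Qed.

Lemma v_strict a b : olt lt0 (v a) (v b) -> v (a + b) = v a.
Proof using HS.
move=> h; have h1 := v_ultra a b; rewrite /omin h in h1.
case/(oleP hs_sto0): h1 => [//|h2].
have h3 := v_ultra (a + b) (- b); rewrite addrK v_neg in h3.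
have h4 : olt lt0 (v a) (omin lt0 (v (a + b)) (v b)) by rewrite /omin; case: ifP.
by case: (olt_nle hs_sto0 h4).
Qed.

Lemma vD a b : lt1 0 a -> olt lt0 (v a) (v b) -> lt1 0 (a - b).
Proof using HS.
move=> a0 h; case: (lt_tri hs_ov1 a b) => [ab|e|ba].
- by case: (olt_nle hs_sto0 h); apply: v_mono.
- by subst; move: h; rewrite (negbTE (olt_irr hs_sto0 _)).
- exact: (proj1 (lt_subE hs_ov1 b a) ba).
Qed.
End HAM.

Section EXT.
Variable C : realFieldType.
Variable G : lmodType C.
Variable lt : rel G.
Variable Q : G -> Prop.
Hypothesis ov : ordered_vs lt.
Hypothesis dc : down_closed lt Q.

Definition pt (x : (G * C^o)%type) : G := - (x.2^-1 *: x.1).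
Definition posP (x : (G * C^o)%type) : Prop :=
  if x.2 == 0 then (lt 0 x.1 : Prop) else if 0 < x.2 then Q (pt x) else ~ Q (pt x).
Definition ltX : rel (G * C^o)%type := fun x y => pb (posP (y - x)).

Lemma K1 (g q : G) (c : C) : c != 0 -> q - pt (g, c) = c^-1 *: (g + c *: q).
Proof using ov dc. by move=> c0; rewrite /pt /= opprK scalerDr scalerA mulVf // scale1r addrC. Qed.
Lemma K2 (g q q1 : G) (c : C) : g + c *: q = (g + c *: q1) + c *: (q - q1).
Proof using ov dc. by rewrite scalerBr [RHS]addrA [RHS]addrAC addrK. Qed.
Lemma K3 (g1 g2 q : G) (c1 c2 : C) : (g1 + g2) + (c1 + c2) *: q = (g1 + c1 *: q) + (g2 + c2 *: q).
Proof using ov dc. by rewrite scalerDl addrACA. Qed.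
Lemma negK (c : C) (q q1 : G) : c *: (q - q1) = (- c) *: (q1 - q).
Proof using ov dc. by rewrite scaleNr -scalerN opprB. Qed.
Lemma ptN (g : G) (c : C) : pt (- g, - c) = pt (g, c).
Proof using ov dc. by rewrite /pt /= invrN scaleNr scalerN opprK. Qed.

Lemma posP0 (g : G) : posP (g, 0) <-> lt 0 g.
Proof using ov dc. by rewrite /posP /= eqxx. Qed.

Lemma posP_pos (g : G) (c : C) : 0 < c -> posP (g, c) <-> exists q, Q q /\ nn lt (g + c *: q).
Proof using ov dc.
move=> c0; rewrite /posP /= gt_eqF // c0; split.
  move=> hq; exists (pt (g, c)); split => //; right.
  by rewrite /pt /= scalerN scalerA divff ?gt_eqF // scale1r subrr.
move=> [q [Qq hn]].
have : nn lt (q - pt (g, c)) by rewrite K1 ?gt_eqF //; apply: (nn_scale ov) => //; rewrite invr_ge0 ltW.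
case/(nn_lt ov) => [h|->//]; exact: dc h Qq.
Qed.

Lemma posP_neg (g : G) (c : C) : c < 0 -> posP (g, c) <-> exists r, ~ Q r /\ nn lt (g + c *: r).
Proof using ov dc.
move=> c0; rewrite /posP /= lt_eqF // ltNge (ltW c0) /=; split.
  move=> hq; exists (pt (g, c)); split => //; right.
  by rewrite /pt /= scalerN scalerA divff ?lt_eqF // scale1r subrr.
move=> [r [Qr hn]] Qp; apply: Qr.
have : nn lt (pt (g, c) - r).
  rewrite -opprB K1 ?lt_eqF // -scaleNr; apply: (nn_scale ov) => //.
  by rewrite oppr_ge0 invr_le0 ltW.
case/(nn_lt ov) => [h|->//]; exact: dc h Qp.
Qed.

Lemma nnK2 (g q q1 : G) (c : C) : nn lt (g + c *: q1) -> nn lt (c *: (q - q1)) -> nn lt (g + c *: q).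
Proof using ov dc. by rewrite (K2 g q q1 c); apply: (nn_add ov). Qed.
Lemma posK2 (g q q1 : G) (c : C) : nn lt (g + c *: q1) -> lt 0 (c *: (q - q1)) -> lt 0 (g + c *: q).
Proof using ov dc. by rewrite (K2 g q q1 c) => h1 h2; rewrite addrC; exact: (pos_nn_add ov h2 h1). Qed.

Lemma L0 (g1 g2 : G) (c2 : C) : posP (g1, 0) -> posP (g2, c2) -> posP (g1 + g2, c2).
Proof using ov dc.
move/posP0 => h1; case: (ltgtP c2 0) => [cn|cp|->].
- move/(posP_neg _ cn) => [r [Qr hn]]; apply/(posP_neg _ cn); exists r; split => //.
  by rewrite -addrA; left; apply: (pos_nn_add ov).
- move/(posP_pos _ cp) => [r [Qr hn]]; apply/(posP_pos _ cp); exists r; split => //.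
  by rewrite -addrA; left; apply: (pos_nn_add ov).
- by move/posP0 => h2; apply/posP0; apply: (pos_add ov).
Qed.

Lemma Lpp (g1 g2 : G) (c1 c2 : C) : 0 < c1 -> 0 < c2 -> posP (g1, c1) -> posP (g2, c2) ->
  posP (g1 + g2, c1 + c2).
Proof using ov dc.
move=> c1p c2p /(posP_pos _ c1p) [q1 [Q1 n1]] /(posP_pos _ c2p) [q2 [Q2 n2]].
have [q [Qq [m1 m2]]] : exists q, Q q /\ nn lt (q - q1) /\ nn lt (q - q2).
  case: (lt_tri ov q1 q2) => [h|<-|h].
  - by exists q2; split => //; split; [apply: (lt_nn ov); left|right; rewrite subrr].
  - by exists q1; split => //; split; right; rewrite subrr.
  - by exists q1; split => //; split; [right; rewrite subrr|apply: (lt_nn ov); left].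
apply/posP_pos; first by rewrite addr_gt0.
exists q; split => //; rewrite K3; apply: (nn_add ov).
  by apply: nnK2 n1 _; apply: (nn_scale ov) => //; rewrite ltW.
by apply: nnK2 n2 _; apply: (nn_scale ov) => //; rewrite ltW.
Qed.

Lemma Lnn (g1 g2 : G) (c1 c2 : C) : c1 < 0 -> c2 < 0 -> posP (g1, c1) -> posP (g2, c2) ->
  posP (g1 + g2, c1 + c2).
Proof using ov dc.
move=> c1p c2p /(posP_neg _ c1p) [q1 [Q1 n1]] /(posP_neg _ c2p) [q2 [Q2 n2]].
have [q [Qq [m1 m2]]] : exists q, ~ Q q /\ nn lt (q1 - q) /\ nn lt (q2 - q).
  case: (lt_tri ov q1 q2) => [h|<-|h].
  - by exists q1; split => //; split; [right; rewrite subrr|apply: (lt_nn ov); left].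
  - by exists q1; split => //; split; right; rewrite subrr.
  - by exists q2; split => //; split; [apply: (lt_nn ov); left|right; rewrite subrr].
apply/posP_neg; first by rewrite -oppr_gt0 opprD addr_gt0 // oppr_gt0.
exists q; split => //; rewrite K3; apply: (nn_add ov).
  by apply: nnK2 n1 _; rewrite negK; apply: (nn_scale ov) => //; rewrite oppr_ge0 ltW.
by apply: nnK2 n2 _; rewrite negK; apply: (nn_scale ov) => //; rewrite oppr_ge0 ltW.
Qed.

Lemma Lpn (g1 g2 : G) (c1 c2 : C) : 0 < c1 -> c2 < 0 -> posP (g1, c1) -> posP (g2, c2) ->
  posP (g1 + g2, c1 + c2).
Proof using ov dc.
move=> c1p c2p /(posP_pos _ c1p) [q1 [Q1 n1]] /(posP_neg _ c2p) [r2 [Q2 n2]].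
have qr : lt q1 r2.
  case: (lt_tri ov q1 r2) => [//|e|h]; first by subst.
  by case: Q2; apply: dc h Q1.
case: (ltgtP (c1 + c2) 0) => [sn|sp|s0].
- apply/(posP_neg _ sn); exists r2; split => //; rewrite K3; apply: (nn_add ov) => //.
  apply: nnK2 n1 _; apply: (nn_scale ov); first by rewrite ltW.
  by apply: (lt_nn ov); left.
- apply/(posP_pos _ sp); exists q1; split => //; rewrite K3; apply: (nn_add ov) => //.
  apply: nnK2 n2 _; rewrite negK; apply: (nn_scale ov); first by rewrite oppr_ge0 ltW.
  by apply: (lt_nn ov); left.
- rewrite s0; apply/posP0.
  have -> : g1 + g2 = (g1 + c1 *: r2) + (g2 + c2 *: r2) by rewrite -K3 s0 scale0r addr0.
  apply: (pos_nn_add ov) => //; apply: posK2 n1 _; apply: (pos_scale ov) => //.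
  exact: (proj1 (lt_subE ov _ _) qr).
Qed.

Lemma posP_add' (g1 : G) (c1 : C) (g2 : G) (c2 : C) : posP (g1, c1) -> posP (g2, c2) -> posP (g1 + g2, c1 + c2).
Proof using ov dc.
have sym : forall g1 c1 g2 c2, posP (g2 + g1, c2 + c1) -> posP (g1 + g2, c1 + c2).
  by move=> a b c d; rewrite addrC [b + _]addrC.
case: (ltgtP c1 0) => [c1n|c1p|->]; last by rewrite add0r; apply: L0.
- case: (ltgtP c2 0) => [c2n|c2p|->] h1 h2.
  + exact: Lnn.
  + by apply: sym; apply: Lpn.
  + by apply: sym; rewrite add0r; apply: L0.
- case: (ltgtP c2 0) => [c2n|c2p|->] h1 h2.
  + exact: Lpn.
  + exact: Lpp.
  + by apply: sym; rewrite add0r; apply: L0.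
Qed.

Lemma posP_add x y : posP x -> posP y -> posP (x + y).
Proof using ov dc. by case: x => g1 c1; case: y => g2 c2; apply: posP_add'. Qed.

Lemma posP_tot (g : G) (c : C) : ~ (g = 0 /\ c = 0) -> posP (g, c) \/ posP (- g, - c).
Proof using ov dc.
move=> nz; case: (ltgtP c 0) => [cn|cp|c0].
- case: (classic (Q (pt (g, c)))) => hq.
    right; rewrite /posP /= oppr_eq0 lt_eqF // oppr_gt0 cn ptN //.
  by left; rewrite /posP /= lt_eqF // ltNge (ltW cn).
- case: (classic (Q (pt (g, c)))) => hq.
    by left; rewrite /posP /= gt_eqF // cp.
  right; rewrite /posP /= oppr_eq0 gt_eqF // oppr_gt0 ltNge (ltW cp) ptN //.
- subst; rewrite oppr0; have g0 : g != 0 by apply/eqP => e; apply: nz.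
  by case: (pos_or_neg ov g0) => h; [left|right]; apply/posP0.
Qed.

Lemma posP_scale (a : C) x : 0 < a -> posP x -> posP (a *: x).
Proof using ov dc.
case: x => g c a0; have -> : a *: (g, c) = (a *: g, a * c) by [].
rewrite /posP /= mulf_eq0 (gt_eqF a0) /=.
have -> : (0 < a * c) = (0 < c) := pmulr_rgt0 _ a0.
have -> : pt (a *: g, a * c) = pt (g, c).
  by rewrite /pt /= invfM scalerA mulrAC mulVf ?mul1r // gt_eqF.
by case: ifP => // _; apply: (pos_scale ov).
Qed.

Lemma posP_zero : ~ posP 0.
Proof using ov dc. by rewrite /posP /= eqxx; exact: (@lt_irr _ _ _ ov 0). Qed.

Lemma ltX_ovs : ordered_vs ltX.
Proof using ov dc.
split; first split.
- by move=> x; apply/negP => /pbP; rewrite subrr; apply: posP_zero.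
- move=> x y z /pbP h1 /pbP h2; apply/pbP.
  have -> : z - x = (z - y) + (y - x) by rewrite addrA subrK.
  exact: posP_add.
- move=> [x1 x2] [y1 y2]; case: (classic (x1 = y1 /\ x2 = y2)) => [[-> ->]|nxy].
    by constructor 2.
  have nz : ~ (y1 - x1 = 0 /\ y2 - x2 = 0).
    move=> [/eqP e1 /eqP e2]; apply: nxy; move: e1 e2.
    by rewrite !subr_eq0 => /eqP -> /eqP ->.
  case: (posP_tot nz) => h; [constructor 1|constructor 3]; apply/pbP.
    exact: h.
  by rewrite !opprB in h; exact: h.
- move=> x y z /pbP h; apply/pbP; by rewrite opprD addrACA subrr addr0.
- move=> c x c0 /pbP h; apply/pbP; rewrite subr0; rewrite subr0 in h.
  exact: posP_scale.
Qed.

Lemma ltX_j (a b : G) : ltX (a, 0) (b, 0) <-> lt a b.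
Proof using ov dc.
rewrite /ltX; split => [/pbP|h]; last apply/pbP.
  change (posP (b - a, 0 - 0) -> lt a b); rewrite subrr => /posP0.
  exact: (proj2 (lt_subE ov a b)).
change (posP (b - a, 0 - 0)); rewrite subrr; apply/posP0.
exact: (proj1 (lt_subE ov a b)).
Qed.
End EXT.

Section OMAP.
Variables (A B : eqType) (lta : rel A) (ltb : rel B) (f : A -> B).
Hypotheses (finj : injective f) (fl : forall x y, ltb (f x) (f y) = lta x y).
Lemma omap_olt a b : olt ltb (omap f a) (omap f b) = olt lta a b.
Proof using fl. by case: a => [x|]; case: b => [y|] //=. Qed.
Lemma omap_ole a b : ole ltb (omap f a) (omap f b) = ole lta a b.
Proof using fl finj.
rewrite /ole omap_olt; congr orb.
case: a => [x|]; case: b => [y|] //=; apply/eqP/eqP => [[/finj ->]|[->]] //.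
Qed.
Lemma omap_omin a b : omap f (omin lta a b) = omin ltb (omap f a) (omap f b).
Proof using fl. by rewrite /omin omap_olt; case: ifP. Qed.
End OMAP.

Lemma emb_lt (A B : Type) (lta : rel A) (ltb : rel B) (f : A -> B) :
  strict_total_order lta -> strict_total_order ltb ->
  (forall x y, lta x y -> ltb (f x) (f y)) -> injective f ->
  forall x y, ltb (f x) (f y) = lta x y.
Proof.
move=> [_ _ tri] [irr tr _] hf finj x y; apply/idP/idP; last exact: hf.
case: (tri x y) => [//|->|yx] h; first by rewrite (negbTE (irr _)) in h.
by have := tr _ _ _ h (hf _ _ yx); rewrite (negbTE (irr _)).
Qed.

Lemma lin_facts (C : realFieldType) (G Gs : lmodType C) (i : G -> Gs) : is_linear i ->
  [/\ i 0 = 0, (forall x y, i (x + y) = i x + i y), (forall (c : C) x, i (c *: x) = c *: i x),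
      (forall x, i (- x) = - i x) & (forall x y, i (x - y) = i x - i y)].
Proof.
move=> il.
have i0 : i 0 = 0.
  have := il 1 0 0; rewrite scaler0 addr0 scale1r => h.
  by have := congr1 (fun z => z - i 0) h; rewrite /= addrK subrr => /esym.
have iD x y : i (x + y) = i x + i y by have := il 1 x y; rewrite !scale1r.
have iZ c x : i (c *: x) = c *: i x by have := il c x 0; rewrite addr0 i0 addr0.
have iN x : i (- x) = - i x by rewrite -scaleN1r iZ scaleN1r.
by split => // x y; rewrite iD iN.
Qed.

Lemma k_pos (C : realFieldType) (G Gs : lmodType C) (lt : rel G) (Q : G -> Prop)
  (lts : rel Gs) (i : G -> Gs) (hs : Gs) :
  ordered_vs lts -> (forall x y, lt x y -> lts (i x) (i y)) -> is_linear i ->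
  (forall q, Q q -> lts (i q) hs) -> (forall q, ~ Q q -> lts hs (i q)) ->
  forall x : (G * C^o)%type, posP lt Q x -> lts 0 (i x.1 + x.2 *: hs).
Proof.
move=> ovs ilt il hQ hnQ [g c]; case: (lin_facts il) => i0 iD iZ iN iB.
rewrite /posP /=; case: ifP => c0.
  by rewrite (eqP c0) scale0r addr0 => h; have := ilt _ _ h; rewrite i0.
have c0' : c != 0 by rewrite c0.
case: ifP => cp h.
  have := proj1 (lt_subE ovs _ _) (hQ _ h) => /(pos_scale ovs cp).
  by rewrite /pt /= iN iZ scalerBr scalerN scalerA divff // scale1r opprK addrC.
have cn : 0 < - c by rewrite oppr_gt0; move: cp c0'; case: ltgtP.
have := proj1 (lt_subE ovs _ _) (hnQ _ h) => /(pos_scale ovs cn).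
rewrite /pt /= iN iZ scalerBr scaleNr scalerN opprK scalerA divff // scale1r.
by rewrite scaleNr opprK.
Qed.

Section MAIN.
Variable C : realFieldType.
Variable G : lmodType C.
Variables (lt0 lt1 : rel G) (v : G -> option G) (alpha : G) (P P' : G -> Prop).
Hypothesis HS : hamel_space lt0 lt1 v.
Hypothesis Ha : exists g, g != 0 /\ v g = Some alpha.
Hypothesis HP : alpha_cut lt0 lt1 v alpha P.
Hypothesis HP' : down_closed lt0 P'.

Let ov0 := hs_ov0 HS.
Let ov1 := hs_ov1 HS.
Let sto0 := hs_sto0 HS.
Let sto1 : strict_total_order lt1. Proof. by case: ov1. Qed.

Lemma v_alpha : v alpha = Some alpha.
Proof using HS Ha. by case: Ha => g [_ e]; have := v_idem HS g; rewrite e. Qed.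
Lemma alpha_pos : lt1 0 alpha.
Proof using HS Ha. by case: Ha => g [_ e]; have := v_pos HS g; rewrite e. Qed.

Definition ball x := cball lt0 v alpha x.
Definition Q1 x := (ball x /\ P x) \/ (~ ball x /\ lt1 x 0).

Lemma ball0 : ball 0.
Proof using HS. by rewrite /ball /cball (v0 HS) /ole orbT. Qed.

Lemma ballE x : ball x <-> ole lt0 (Some alpha) (v x). Proof. by []. Qed.
Lemma nballE x : ~ ball x <-> olt lt0 (v x) (Some alpha).
Proof using HS.
split; first by move/(nole_olt sto0).
by move=> h hb; apply: (olt_nle sto0 h).
Qed.

Lemma dcQ1 : down_closed lt1 Q1.
Proof using HS HP.
move=> x y yx; case: HP => Pb Pd Pi; rewrite /Q1 /ball /cball.
case=> [[bx Px]|[nbx x0]].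
- case: (classic (ball y)) => hby; first by left; split=> //; apply: Pd bx hby yx Px.
  right; split => //.
  case: (lt_tri ov1 y 0) => [//|e|y0]; first by subst; case: hby; apply: ball0.
  case: hby; rewrite /ball /cball; exact: (ole_trans sto0 bx (v_mono HS y0 yx)).
- right; split; last exact: (lt_trans ov1 yx x0).
  move=> hby; apply: nbx.
  have h1 : lt1 0 (- x) by apply/(lt_negE ov1).
  have h2 : lt1 (- x) (- y).
    apply/(lt_subE ov1); rewrite opprK addrC; exact: (proj1 (lt_subE ov1 _ _) yx).
  have := v_mono HS h1 h2; rewrite !(v_neg HS) => h.
  exact: (ole_trans sto0 hby h).
Qed.

Definition G' := (G * C^o)%type.
Definition j (g : G) : G' := (g, 0).
Definition w (x : G') : option G :=
  if x.2 == 0 then v x.1 else omin lt0 (v x.1) (Some alpha).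
Definition v' (x : G') : option G' := omap j (w x).
Definition lt0' := ltX lt0 P'.
Definition lt1' := ltX lt1 Q1.
Definition hh : G' := (0, 1).

Let ovX0 : ordered_vs lt0' := ltX_ovs ov0 HP'.
Let ovX1 : ordered_vs lt1' := ltX_ovs ov1 dcQ1.
Let stoX0 : strict_total_order lt0'. Proof. by case: ovX0. Qed.

Lemma j_inj : injective j. Proof. by move=> a b []. Qed.
Lemma j_lt0 a b : lt0' (j a) (j b) = lt0 a b.
Proof using HS HP'.
apply/idP/idP => h; first exact: (proj1 (ltX_j ov0 HP' a b) h).
exact: (proj2 (ltX_j ov0 HP' a b) h).
Qed.
Lemma j_lt1 a b : lt1' (j a) (j b) = lt1 a b.
Proof using HS HP.
apply/idP/idP => h; first exact: (proj1 (ltX_j ov1 dcQ1 a b) h).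
exact: (proj2 (ltX_j ov1 dcQ1 a b) h).
Qed.

Lemma w_le1 x : ole lt0 (w x) (v x.1).
Proof using HS. rewrite /w; case: ifP => _; [exact: ole_refl|exact: (omin_l sto0 _ _)]. Qed.
Lemma w_le2 x : x.2 != 0 -> ole lt0 (w x) (Some alpha).
Proof using HS. by move=> h; rewrite /w (negbTE h); exact: (omin_r sto0 _ _). Qed.

Lemma w_ultra x y : ole lt0 (omin lt0 (w x) (w y)) (w (x + y)).
Proof using HS.
case: x => g1 c1; case: y => g2 c2.
have -> : (g1, c1) + (g2, c2) = (g1 + g2, c1 + c2) :> G' by [].
have h1 : ole lt0 (omin lt0 (w (g1, c1)) (w (g2, c2))) (v (g1 + g2)).
  apply: (@ole_trans G lt0 sto0 _ _ _ _ (v_ultra HS g1 g2)).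
  by apply: (@omin_mono G lt0 sto0); apply: w_le1.
rewrite {3}/w /=; case: ifP => hs //.
apply: (@omin_glb G lt0) => //.
case: (boolP (c1 == 0)) => c10.
  have c20 : c2 != 0 by apply: contraFneq hs; rewrite (eqP c10) => ->; rewrite addr0.
  exact: (ole_trans sto0 (omin_r sto0 _ _) (@w_le2 (g2, c2) c20)).
exact: (ole_trans sto0 (omin_l sto0 _ _) (@w_le2 (g1, c1) c10)).
Qed.

Lemma w_scale (c : C) x : c != 0 -> w (c *: x) = w x.
Proof using HS.
case: x => g d c0; have -> : c *: (g, d) = (c *: g, c * d) :> G' by [].
by rewrite /w /= mulf_eq0 (negbTE c0) /= (v_scale HS).
Qed.

Lemma w_idem x : vext v (w x) = w x.
Proof using HS Ha.
rewrite /w; case: ifP => _; first exact: (v_idem HS).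
rewrite /omin; case: ifP => _; [exact: (v_idem HS)|exact: v_alpha].
Qed.

Lemma Q1_nb x : ~ ball x -> (Q1 x <-> lt1 x 0).
Proof.
move=> nb; rewrite /Q1; split.
  by case=> [[b _]|[_ h]] //; case: nb.
by move=> h; right.
Qed.
Lemma Q1_b x : ball x -> (Q1 x <-> P x).
Proof.
move=> b; rewrite /Q1; split.
  by case=> [[_ h]|[nb _]] //; case: nb.
by move=> h; left.
Qed.

Lemma Lval (g : G) (c : C) : c != 0 -> olt lt0 (v g) (Some alpha) ->
  (posP lt1 Q1 (g, c) <-> lt1 0 g).
Proof using HS.
move=> c0 hv.
set p := pt (g, c).
have vp : v p = v g by rewrite /p /pt /= (v_neg HS) (v_scale HS) // invr_eq0.
have nb : ~ ball p by apply: (proj2 (nballE p)); rewrite vp.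
have hQ := Q1_nb nb.
have p0 : p != 0 by apply/eqP => e; move: hv; rewrite -vp e (v0 HS).
rewrite /posP /= (negbTE c0) -/p; case: ifP => cp.
  rewrite hQ (lt_negE ov1) /p /pt /= opprK.
  by apply: (pos_scaleE ov1); rewrite invr_gt0.
have cn : c < 0 by move: cp c0; case: ltgtP.
have e2 : lt1 0 p <-> lt1 0 g.
  rewrite /p /pt /= -scaleNr; apply: (pos_scaleE ov1).
  by rewrite oppr_gt0 invr_lt0.
rewrite hQ -e2; split => [nq|h hp].
  case: (lt_tri ov1 p 0) => [h|e|h] //; by [case: nq|case/eqP: p0].
exact: (lt_asym ov1 hp h).
Qed.

Lemma Qshift p e : olt lt0 (omin lt0 (v p) (Some alpha)) (v e) -> (Q1 p <-> Q1 (p + e)).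
Proof using HS HP.
case: HP => Pb Pd Pi.
rewrite /omin; case: ifP => hp he.
- have vpe : v (p + e) = v p := v_strict HS he.
  have nbp : ~ ball p := proj2 (nballE p) hp.
  have nbpe : ~ ball (p + e) by apply: (proj2 (nballE _)); rewrite vpe.
  rewrite (Q1_nb nbp) (Q1_nb nbpe); split => h.
    apply/(lt_negE ov1); rewrite opprD; apply: (vD HS); first exact: (proj1 (lt_negE ov1 _) h).
    by rewrite (v_neg HS).
  have h' : olt lt0 (v (- (p + e))) (v (- e)) by rewrite !(v_neg HS) vpe.
  have := vD HS (proj1 (lt_negE ov1 _) h) h'.
  by rewrite opprD opprK subrK => h2; exact: (proj2 (lt_negE ov1 p) h2).
- have bp : ball p.
    by case: (ole_total sto0 (Some alpha) (v p)) => // h; rewrite h in hp.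
  have bpe : ball (p + e).
    apply: (@ole_trans G lt0 sto0 _ _ _ _ (v_ultra HS p e)).
    by apply: (@omin_glb G lt0) => //; apply: (olt_ole sto0).
  rewrite (Q1_b bp) (Q1_b bpe); apply: iff_sym; apply: Pi => //.
  by rewrite /oball addrC addKr.
Qed.

Lemma Dw a b : posP lt1 Q1 a -> olt lt0 (w a) (w b) -> posP lt1 Q1 (a - b).
Proof using HS HP.
case: a => g1 c1; case: b => g2 c2.
have -> : (g1, c1) - (g2, c2) = (g1 - g2, c1 - c2) :> G' by [].
rewrite /w /=; case: (boolP (c1 == 0)) => c10; case: (boolP (c2 == 0)) => c20 /=.
- rewrite (eqP c10) (eqP c20) subrr => /(posP0 ov1 dcQ1) h1 h2; apply/(posP0 ov1 dcQ1).
  exact: (vD HS h1 h2).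
- move=> h1 /(olt_omin sto0) [h2 h3]; rewrite (eqP c10) in h1 *.
  have vd : v (g1 - g2) = v g1 by apply: (v_strict HS); rewrite (v_neg HS).
  have h1' := proj1 (posP0 ov1 dcQ1 _) h1.
  apply/(Lval _ _); [by rewrite sub0r oppr_eq0|by rewrite vd|exact: (vD HS h1' h2)].
- rewrite (eqP c20) subr0 => h1 h2.
  set p := pt (g1, c1); set e := c1^-1 *: g2.
  have ept : pt (g1 - g2, c1) = p + e.
    by rewrite /p /e /pt /= scalerBr opprB addrC.
  have vp : v p = v g1 by rewrite /p /pt /= (v_neg HS) (v_scale HS) // invr_eq0.
  have ve : v e = v g2 by rewrite /e (v_scale HS) // invr_eq0.
  have hs : Q1 p <-> Q1 (p + e) by apply: Qshift; rewrite vp ve.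
  move: h1; rewrite /posP /= (negbTE c10) ept -/p; case: ifP => _; by rewrite hs.
- move=> h1 /(olt_omin2 sto0) [h2 h3].
  have hg1 : lt1 0 g1 := proj1 (Lval c10 h2) h1.
  case: (boolP (c1 - c2 == 0)) => cd.
    by rewrite (eqP cd); apply/(posP0 ov1 dcQ1); exact: (vD HS hg1 h3).
  have vd : v (g1 - g2) = v g1 by apply: (v_strict HS); rewrite (v_neg HS).
  by apply/(Lval cd); [rewrite vd|exact: (vD HS hg1 h3)].
Qed.

Lemma v'_mono x y : lt1' 0 x -> lt1' x y -> ole lt0' (v' y) (v' x).
Proof using HS HP HP'.
rewrite /v' (omap_ole j_inj j_lt0) => /pbP h0 /pbP hxy.
case: (ole_total sto0 (w y) (w x)) => // hlt; exfalso.
rewrite subr0 in h0.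
have hD := Dw h0 hlt.
have := posP_add ov1 dcQ1 hD hxy; rewrite addrA subrK subrr.
exact: (posP_zero ov1 dcQ1).
Qed.

Lemma v'_idem x : vext v' (v' x) = v' x.
Proof using HS Ha.
rewrite /v'; have := w_idem x; case: (w x) => [a|] //= e.
by rewrite /w /= eqxx e.
Qed.

Lemma v'_pos x : olt lt1' (Some 0) (v' x).
Proof using HS HP Ha.
rewrite /v'; have -> : Some (0 : G') = omap j (Some 0) by [].
rewrite (omap_olt j_lt1) /w; case: ifP => _; first exact: (v_pos HS).
by rewrite /omin; case: ifP => _; [exact: (v_pos HS)|exact: alpha_pos].
Qed.

Lemma v'_none x : v' x = None <-> x = 0.
Proof using HS.
rewrite /v'; case: x => g c; rewrite /w /=; case: ifP => c0.
  rewrite (eqP c0); split.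
    by case E: (v g) => //= _; move/(v_none HS): E => ->.
  by move/(congr1 fst) => /= ->; rewrite (v0 HS).
split; first by case E: (omin _ _ _) => //; case: (omin_some sto0 E).
by move/(congr1 snd) => /= e; rewrite e eqxx in c0.
Qed.

Lemma hs' : hamel_space lt0' lt1' v'.
Proof using HS HP HP' Ha.
split; first by split.
split; first exact: v'_none.
split.
- move=> x y; rewrite /v' -(omap_omin j_lt0) (omap_ole j_inj j_lt0); exact: w_ultra.
- by move=> c x c0; rewrite /v' w_scale.
- exact: v'_mono.
- exact: v'_idem.
- exact: v'_pos.
Qed.

Lemma univ (Gs : lmodType C) (lt0s lt1s : rel Gs) (vs : Gs -> option Gs)
               (i : G -> Gs) (hs : Gs) :
          hamel_space lt0s lt1s vs ->
          hamel_embedding lt0 lt1 v lt0s lt1s vs i ->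
          (forall g, P' g -> lt0s (i g) hs) ->
          (forall g, ~ P' g -> lt0s hs (i g)) ->
          (forall (g : G) (c : C), c != 0 ->
             vs (i g + c *: hs) = omin lt0s (vs (i g)) (Some (i alpha))) ->
          (forall (g : G) (c : C), c = 0 -> vs (i g + c *: hs) = vs (i g)) ->
          (forall g, P g -> lt1s (i g) hs) ->
          (forall g, cball lt0 v alpha g -> ~ P g -> lt1s hs (i g)) ->
          exists k : G' -> Gs,
            hamel_embedding lt0' lt1' v' lt0s lt1s vs k /\
            (forall g, k (j g) = i g) /\ k hh = hs.
Proof using HS HP HP' Ha.
move=> HSs [iinj ilin ilt0 ilt1 iv] hP'1 hP'2 hc hc0 hP1 hP2.
case: (lin_facts ilin) => i0 iD iZ iN iB.
have ovs0 := hs_ov0 HSs; have ovs1 := hs_ov1 HSs; have stos0 := hs_sto0 HSs.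
have stos1 : strict_total_order lt1s by case: ovs1.
have ilt0E := emb_lt sto0 stos0 ilt0 iinj.
have vhs : vs hs = Some (i alpha).
  by have := hc 0 1 (oner_neq0 _); rewrite i0 add0r scale1r (v0 HSs).
have hlow q : olt lt0 (v q) (Some alpha) -> olt lt0s (vs (i q)) (vs hs).
  by rewrite iv vhs; case: (v q) => [a|] //= ha; apply: ilt0.
have hQa q : Q1 q -> lt1s (i q) hs.
  case=> [[b Pq]|[nb q0]]; first exact: hP1.
  have h1 : lt1s 0 (- i q) by apply/(lt_negE ovs1); rewrite -i0; apply: ilt1.
  have h2 : olt lt0s (vs (- i q)) (vs (- hs)).
    by rewrite !(v_neg HSs); apply: hlow; apply/nballE.
  have := vD HSs h1 h2; rewrite opprK addrC => h3.
  exact: (proj2 (lt_subE ovs1 _ _) h3).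
have hQb q : ~ Q1 q -> lt1s hs (i q).
  move=> nq; case: (classic (ball q)) => bq.
    by apply: hP2 => // Pq; apply: nq; left.
  have q0 : lt1 0 q.
    case: (lt_tri ov1 q 0) => [h|e|//]; first by case: nq; right.
    by subst; case: bq; apply: ball0.
  have h1 : lt1s 0 (i q) by rewrite -i0; apply: ilt1.
  have := vD HSs h1 (hlow _ (proj1 (nballE q) bq)) => h3.
  exact: (proj2 (lt_subE ovs1 _ _) h3).
pose k (x : G') := i x.1 + x.2 *: hs.
have kB x y : k (x - y) = k x - k y.
  by case: x y => [g1 c1] [g2 c2]; rewrite /k /= iB scalerBl opprD addrACA.
have k0 z : k z = 0 -> z = 0.
  case: z => g c; rewrite /k /= => hk; case: (boolP (c == 0)) => c0.
    move: hk; rewrite (eqP c0) scale0r addr0 -i0 => /iinj ->; by [].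
  by have := hc g c c0; rewrite hk (v0 HSs) => /esym /(omin_some stos0).
exists k; split; last split.
- split.
  + move=> x y e; apply/eqP; rewrite -subr_eq0; apply/eqP; apply: k0.
    by rewrite kB e subrr.
  + move=> c [g1 c1] [g2 c2]; rewrite /k /=.
    have -> : (c *: c1 + c2 : C^o) = c * c1 + c2 by [].
    by rewrite ilin scalerDl -scalerA scalerDr addrACA.
  + move=> x y /pbP h; apply/(lt_subE ovs0); rewrite -kB.
    exact: (k_pos ovs0 ilt0 ilin hP'1 hP'2 h).
  + move=> x y /pbP h; apply/(lt_subE ovs1); rewrite -kB.
    exact: (k_pos ovs1 ilt1 ilin hQa hQb h).
  + case=> g c; rewrite /v' /k /=.
    have -> : forall o, omap k (omap j o) = omap i o.
      by case=> [a|] //=; rewrite /k /= scale0r addr0.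
    rewrite /w /=; case: ifP => c0.
      by rewrite hc0 ?(eqP c0) // iv.
    rewrite hc ?c0 // iv (omap_omin ilt0E) //.
- by move=> g; rewrite /k /= scale0r addr0.
- by rewrite /k /= i0 add0r scale1r.
Qed.

Lemma main_exists :
  exists (G' : lmodType C) (lt0' lt1' : rel G') (v' : G' -> option G')
         (j : G -> G') (h : G'),
    hamel_space lt0' lt1' v' /\
    [/\ hamel_embedding lt0 lt1 v lt0' lt1' v' j,
        (forall g, P' g -> lt0' (j g) h) /\ (forall g, ~ P' g -> lt0' h (j g)),
        v' h = Some (j alpha),
        (forall g, P g -> lt1' (j g) h) /\
        (forall g, cball lt0 v alpha g -> ~ P g -> lt1' h (j g)) &
        forall (Gs : lmodType C) (lt0s lt1s : rel Gs) (vs : Gs -> option Gs)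
               (i : G -> Gs) (hs : Gs),
          hamel_space lt0s lt1s vs ->
          hamel_embedding lt0 lt1 v lt0s lt1s vs i ->
          (forall g, P' g -> lt0s (i g) hs) ->
          (forall g, ~ P' g -> lt0s hs (i g)) ->
          (forall (g : G) (c : C), c != 0 ->
             vs (i g + c *: hs) = omin lt0s (vs (i g)) (Some (i alpha))) ->
          (forall (g : G) (c : C), c = 0 -> vs (i g + c *: hs) = vs (i g)) ->
          (forall g, P g -> lt1s (i g) hs) ->
          (forall g, cball lt0 v alpha g -> ~ P g -> lt1s hs (i g)) ->
          exists k : G' -> Gs,
            hamel_embedding lt0' lt1' v' lt0s lt1s vs k /\
            (forall g, k (j g) = i g) /\ k h = hs].
Proof using HS HP HP' Ha.
exists G', lt0', lt1', v', j, hh; split; first exact: hs'.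
split.
- split.
  + exact: j_inj.
  + move=> c x y; rewrite /j.
    have -> : c *: ((x, 0) : G') + (y, 0) = (c *: x + y, c * 0 + 0) :> G' by [].
    by rewrite mulr0 addr0.
  + by move=> x y h; rewrite j_lt0.
  + by move=> x y h; rewrite j_lt1.
  + by move=> x; rewrite /v' /w /= eqxx.
- split => g hg; apply/pbP.
    change (posP lt0 P' (0 - g, 1 - 0)); rewrite sub0r subr0 /posP /= oner_eq0 ltr01.
    by rewrite /pt /= invr1 scale1r opprK.
  change (posP lt0 P' (g - 0, 0 - 1)); rewrite subr0 sub0r /posP /= oppr_eq0 oner_eq0.
  by rewrite oppr_gt0 ltr10 /pt /= invrN1 scaleN1r opprK.
- by rewrite /v' /w /= oner_eq0 (v0 HS) /omin.
- split => g.
    move=> hg; apply/pbP.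
    change (posP lt1 Q1 (0 - g, 1 - 0)); rewrite sub0r subr0 /posP /= oner_eq0 ltr01.
    rewrite /pt /= invr1 scale1r opprK; left; split => //.
    by case: HP => Pb _ _; apply: Pb.
  move=> bg ng; apply/pbP.
  change (posP lt1 Q1 (g - 0, 0 - 1)); rewrite subr0 sub0r /posP /= oppr_eq0 oner_eq0.
  rewrite oppr_gt0 ltr10 /pt /= invrN1 scaleN1r opprK.
  by rewrite (Q1_b bg).
- exact: univ.
Qed.

End MAIN.

Unset Implicit Arguments.

Theorem lemma4p7 (C : realFieldType) (G : lmodType C) (lt0 lt1 : rel G)
    (v : G -> option G) (alpha : G) (P P' : G -> Prop) :
  hamel_space lt0 lt1 v ->
  (exists g, g != 0 /\ v g = Some alpha) ->
  alpha_cut lt0 lt1 v alpha P ->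
  down_closed lt0 P' ->
  exists (G' : lmodType C) (lt0' lt1' : rel G') (v' : G' -> option G')
         (j : G -> G') (h : G'),
    hamel_space lt0' lt1' v' /\
    [/\ hamel_embedding lt0 lt1 v lt0' lt1' v' j,
        (* (1) *)
        (forall g, P' g -> lt0' (j g) h) /\ (forall g, ~ P' g -> lt0' h (j g)),
        (* (2) *)
        v' h = Some (j alpha),
        (* (3) *)
        (forall g, P g -> lt1' (j g) h) /\
        (forall g, cball lt0 v alpha g -> ~ P g -> lt1' h (j g)) &
        (* (4) *)
        forall (Gs : lmodType C) (lt0s lt1s : rel Gs) (vs : Gs -> option Gs)
               (i : G -> Gs) (hs : Gs),
          hamel_space lt0s lt1s vs ->
          hamel_embedding lt0 lt1 v lt0s lt1s vs i ->
          (forall g, P' g -> lt0s (i g) hs) ->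
          (forall g, ~ P' g -> lt0s hs (i g)) ->
          (forall (g : G) (c : C), c != 0 ->
             vs (i g + c *: hs) = omin lt0s (vs (i g)) (Some (i alpha))) ->
          (forall (g : G) (c : C), c = 0 -> vs (i g + c *: hs) = vs (i g)) ->
          (forall g, P g -> lt1s (i g) hs) ->
          (forall g, cball lt0 v alpha g -> ~ P g -> lt1s hs (i g)) ->
          exists k : G' -> Gs,
            hamel_embedding lt0' lt1' v' lt0s lt1s vs k /\
            (forall g, k (j g) = i g) /\ k h = hs].
Proof.
move=> HS Ha HP HP'; exact: (main_exists HS Ha HP HP').
Qed.
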